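(* Let $L$ be a library, $\Lambda$ a set of pairwise compatible libraries with $L\notin\Lambda$, and $I$ an implementation of $L$ that is well defined for $L$ using $\Lambda$. Let $\vec{p}=\langle p_1,\dots,p_T\rangle$ be a concurrent program all of whose method calls are to methods of libraries in $\Lambda\uplus\{L\}$. If $(\vec v,G)\in[\![\langle\!\langle \vec p\rangle\!\rangle_I]\!]$, then there exist a plain execution $G'$ and a function $f$ such that $(\vec v,G')\in[\![\vec p]\!]$ and $f$ is a wide abstraction of $G$ to $G'$ (with respect to $L$ and $I$).
   Context: Fix a set $\mathsf{Val}$ of values, a subset $\mathsf{Loc}\subseteq\mathsf{Val}$ of locations, a set $\mathsf{Method}$ of methods, a finite set of threads $\mathsf{Tid}=\{1,\dots,T\}$, and $\mathsf{EventId}=\mathbb N$. Programs. Sequential programs are given by the grammar $p::= v \mid m(v_1,\dots,v_k)\mid \mathtt{let}\ p\ \mathsf f\mid \mathtt{loop}\ p\mid \mathtt{break}_k\ v$, where $v,v_i\in\mathsf{Val}$, $m\in\mathsf{Method}$, $\mathsf f:\mathsf{Val}\to\mathsf{SeqProg}$, and $k\in\mathbb N^{+}$. A concurrent program is a tuple $\vec p=\langle p_1,\dots,p_T\rangle$ of sequential programs, $p_t$ run by thread $t$. Events and plain executions. Labels are $\mathsf{Lab}=\mathsf{Method}\times\mathsf{Val}^*\times\mathsf{Val}$ (method, inputs, output); events are $\mathsf{Event}=\mathsf{Tid}\times\mathsf{EventId}\times\mathsf{Lab}$; for $e=\langle t,\iota,l\rangle$, $\mathrm{thread}(e)=t$.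 A plain execution is a pair $\langle E,po\rangle$ with $E\subseteq\mathsf{Event}$, $po\subseteq E\times E$, $po=\bigcup_{t}po|_t$, where $po|_t$ (restriction to events of thread $t$) is a strict total order on the events of $t$. Write $\emptyset_G=\langle\emptyset,\emptyset\rangle$ and $\{e\}_G=\langle\{e\},\emptyset\rangle$. For $G_i=\langle E_i,po_i\rangle$ with $E_1\cap E_2=\emptyset$: $G_1;G_2=\langle E_1\cup E_2,\,po_1\cup po_2\cup(E_1\times E_2)\rangle$ and $G_1\parallel G_2=\langle E_1\cup E_2,\,po_1\cup po_2\rangle$. Plain semantics. $[\![p]\!]_t$ is a set of pairs $\langle\langle v,k\rangle,G\rangle$ (output value $v$, break number $k\in\mathbb N$, plain execution $G$): $[\![v]\!]_t=\{\langle\langle v,0\rangle,\emptyset_G\rangle\}$; $[\![\mathtt{break}_k\,v]\!]_t=\{\langle\langle v,k\rangle,\emptyset_G\rangle\}$; $[\![m(\vec v)]\!]_t=\{\langle\langle v',0\rangle,\{\langle t,\iota,\langle m,\vec v,v'\rangle\rangle\}_G\rangle : v'\in\mathsf{Val},\iota\in\mathsf{EventId}\}$; $[\![\mathtt{let}\ p\ \mathsf f]\!]_t=\{\langle r,G_1;G_2\rangle:\langle\langle v,0\rangle,G_1\rangle\in[\![p]\!]_t,\ \langle r,G_2\rangle\in[\![\mathsf f\,v]\!]_t\}\cup\{\langle\langle v,k\rangle,G_1\rangle\in[\![p]\!]_t: k\neq0\}$; $[\![\mathtt{loop}\ p]\!]_t=\bigcup_{j\in\mathbb N}\{\langle\langle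 v,k\rangle,G_0;\dots;G_j\rangle : (\forall i<j.\ \langle\langle\_,0\rangle,G_i\rangle\in[\![p]\!]_t)\wedge\langle\langle v,k+1\rangle,G_j\rangle\in[\![p]\!]_t\}$ (compositions taken only when event sets are disjoint). For concurrent programs, $[\![\langle p_1,\dots,p_T\rangle]\!]=\{\langle\langle v_1,\dots,v_T\rangle,\parallel_{t}G_t\rangle:\forall t.\ \langle\langle v_t,0\rangle,G_t\rangle\in[\![p_t]\!]_t\}$. Stamps and executions. Fix a set $\mathsf{Stamp}$ and a relation $to\subseteq\mathsf{Stamp}\times\mathsf{Stamp}$. An execution is $\langle E,po,stmp,so,hb\rangle$ where $\langle E,po\rangle$ is a plain execution, $stmp$ maps each event of $E$ to a nonempty set of stamps, inducing subevents $\mathsf{SEvent}=\{\langle e,a\rangle: e\in E, a\in stmp(e)\}$, and $so,hb\subseteq\mathsf{SEvent}\times\mathsf{SEvent}$. Its preserved program order is $ppo=\{\langle\langle e_1,a_1\rangle,\langle e_2,a_2\rangle\rangle:\langle e_1,e_2\rangle\in po,\ a_i\in stmp(e_i),\ \langle a_1,a_2\rangle\in to\}$. Libraries. A library is a triple $L=\langle M,\mathsf{loc},\mathcal C\rangle$: $M\subseteq\mathsf{Method}$; $\mathsf{loc}$ maps each event whose method lies in $M$ to a set of locations; $\mathcal C$ is a set of executions satisfying (monotonicity) if $\langle E,po,stmp,so,hb\rangle\in\mathcal C$ and $(ppo\cup so)^+\subseteq hb'\subseteq hb$ then $\langle E,po,stmp,so,hb'\rangle\in\mathcal C$, and (decomposability)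 if $\langle E_1\uplus E_2,po,stmp,so,hb\rangle\in\mathcal C$ and $\mathsf{loc}(E_1)\cap\mathsf{loc}(E_2)=\emptyset$ then its restriction to $E_1$ (restricting $po$, $stmp$, and $so,hb$ to subevents of events in $E_1$) is in $\mathcal C$. For a set $E$ of events, $E|_L$ is the set of events of $E$ whose method is in $L.M$. Two libraries are compatible if their method sets are disjoint. Implementations. An implementation of $L$ is a function $I:\mathsf{Tid}\times L.M\times\mathsf{Val}^*\to\mathsf{SeqProg}$. It is well defined for $L$ using $\Lambda$ if $L\notin\Lambda$ and for all $t,m,\vec v$: $I(t,m,\vec v)$ only calls methods of libraries in $\Lambda$; no element of $[\![I(t,m,\vec v)]\!]_t$ has the form $\langle\langle\_,k+1\rangle,\_\rangle$; and if $\langle\langle v,0\rangle,\langle E,po\rangle\rangle\in[\![I(t,m,\vec v)]\!]_t$ then $E\neq\emptyset$. The translation $\langle\!\langle\cdot\rangle\!\rangle$ replaces, in thread $t$, each call $m(\vec v)$ with $m\in L.M$ by $I(t,m,\vec v)$ and leaves everything else unchanged: $\langle\!\langle v\rangle\!\rangle_t=v$, $\langle\!\langle\mathtt{break}_k v\rangle\!\rangle_t=\mathtt{break}_k v$, $\langle\!\langle\mathtt{loop}\,p\rangle\!\rangle_t=\mathtt{loop}\,\langle\!\langle p\rangle\!\rangle_t$, $\langle\!\langle\mathtt{let}\,p\,\mathsf f\rangle\!\rangle_t=\mathtt{let}\,\langle\!\langle p\rangle\!\rangle_t\,(\lambda v.\langle\!\langle\mathsf f\,v\rangle\!\rangle_t)$,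 and $\langle\!\langle\langle p_1,\dots,p_T\rangle\rangle\!\rangle_I=\langle\langle\!\langle p_1\rangle\!\rangle_1,\dots,\langle\!\langle p_T\rangle\!\rangle_T\rangle$. Wide abstraction. For plain executions $G=\langle E,po\rangle$ (using methods of $\Lambda$) and $G'=\langle E',po'\rangle$ (using methods of $\Lambda\uplus\{L\}$), a function $f:E\to E'$ is a wide abstraction of $G$ to $G'$ if: $f$ is surjective; $E|_L=\emptyset$; for every $x\in E$, if $f(x)$ is not an event of $L$ then $f(x)=x$; $f(po)\subseteq(po')^*$ (where $f(r)=\{\langle f(x),f(y)\rangle:\langle x,y\rangle\in r\}$ and $^*$ is reflexive-transitive closure); for all $e_1,e_2\in E$, $\langle f(e_1),f(e_2)\rangle\in po'$ implies $\langle e_1,e_2\rangle\in po$; and for every $e'=\langle t,\iota,\langle m,\vec v,v'\rangle\rangle\in E'$ with $m\in L.M$, $\langle\langle v',0\rangle,G|_{f^{-1}(e')}\rangle\in[\![I(t,m,\vec v)]\!]_t$, where $G|_A=\langle A,po\cap(A\times A)\rangle$. *)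

(* Defs.v *)
From Stdlib Require Import List Relations Arith.
Import ListNotations.
Set Implicit Arguments.

Section Defs.

Context (Val Method Stamp : Type) (Loc : Val -> Prop) (to : Stamp -> Stamp -> Prop).

(* Threads are natural numbers; the threads of a program with T threads are 1..T.
   EventId = nat. *)
Definition Tid := nat.
Definition EventId := nat.
Definition Lab : Type := (Method * list Val * Val)%type.
Definition Event : Type := (Tid * EventId * Lab)%type.

Definition ev_thread (e : Event) : Tid := fst (fst e).
Definition ev_method (e : Event) : Method := fst (fst (snd e)).

Inductive SeqProg : Type :=
| PVal : Val -> SeqProg
| PCall : Method -> list Val -> SeqProg
| PLet : SeqProg -> (Val -> SeqProg) -> SeqProg
| PLoop : SeqProg -> SeqProg
| PBreak : nat -> Val -> SeqProg.   (* break_k v, with k >= 1 required, see wf below *)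

Fixpoint breaks_pos (p : SeqProg) : Prop :=
  match p with
  | PVal _ => True
  | PCall _ _ => True
  | PLet q f => breaks_pos q /\ forall v, breaks_pos (f v)
  | PLoop q => breaks_pos q
  | PBreak k _ => 0 < k
  end.

Fixpoint calls_only (P : Method -> Prop) (p : SeqProg) : Prop :=
  match p with
  | PVal _ => True
  | PCall m _ => P m
  | PLet q f => calls_only P q /\ forall v, calls_only P (f v)
  | PLoop q => calls_only P q
  | PBreak _ _ => True
  end.

Record PlainExec : Type := mkPlain { pE : Event -> Prop; ppo : Event -> Event -> Prop }.

Definition is_plain (G : PlainExec) : Prop :=
  (forall e1 e2, ppo G e1 e2 -> pE G e1 /\ pE G e2 /\ ev_thread e1 = ev_thread e2) /\
  (forall e, ~ ppo G e e) /\
  (forall e1 e2 e3, ppo G e1 e2 -> ppo G e2 e3 -> ppo G e1 e3) /\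
  (forall e1 e2, pE G e1 -> pE G e2 -> ev_thread e1 = ev_thread e2 ->
      e1 = e2 \/ ppo G e1 e2 \/ ppo G e2 e1).

Definition empty_G : PlainExec := mkPlain (fun _ => False) (fun _ _ => False).
Definition single_G (e : Event) : PlainExec := mkPlain (fun x => x = e) (fun _ _ => False).

Definition disjointG (G1 G2 : PlainExec) : Prop :=
  forall e, pE G1 e -> pE G2 e -> False.

Definition seqG (G1 G2 : PlainExec) : PlainExec :=
  mkPlain (fun e => pE G1 e \/ pE G2 e)
          (fun x y => ppo G1 x y \/ ppo G2 x y \/ (pE G1 x /\ pE G2 y)).

Fixpoint seqn (Gs : nat -> PlainExec) (j : nat) : PlainExec :=
  match j with
  | 0 => Gs 0
  | S j' => seqG (seqn Gs j') (Gs (S j'))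
  end.

Fixpoint sem (t : Tid) (p : SeqProg) (r : Val * nat) (G : PlainExec) : Prop :=
  match p with
  | PVal v => r = (v, 0) /\ G = empty_G
  | PBreak k v => r = (v, k) /\ G = empty_G
  | PCall m vs => exists (v' : Val) (iota : EventId),
      r = (v', 0) /\ G = single_G (t, iota, (m, vs, v'))
  | PLet q f =>
      (exists v G1 G2, sem t q (v, 0) G1 /\ sem t (f v) r G2 /\
                       disjointG G1 G2 /\ G = seqG G1 G2)
      \/ (sem t q r G /\ snd r <> 0)
  | PLoop q =>
      exists (j : nat) (Gs : nat -> PlainExec),
        (forall i, i < j -> exists v0, sem t q (v0, 0) (Gs i)) /\
        sem t q (fst r, S (snd r)) (Gs j) /\
        (forall i i', i <= j -> i' <= j -> i <> i' -> disjointG (Gs i) (Gs i')) /\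
        G = seqn Gs j
  end.

Definition in_threads (T : nat) (t : Tid) : Prop := 1 <= t <= T.

Definition csem (T : nat) (ps : Tid -> SeqProg) (vs : Tid -> Val) (G : PlainExec) : Prop :=
  exists Gs : Tid -> PlainExec,
    (forall t, in_threads T t -> sem t (ps t) (vs t, 0) (Gs t)) /\
    (forall t t', in_threads T t -> in_threads T t' -> t <> t' -> disjointG (Gs t) (Gs t')) /\
    G = mkPlain (fun e => exists t, in_threads T t /\ pE (Gs t) e)
                (fun x y => exists t, in_threads T t /\ ppo (Gs t) x y).

Definition SEvent : Type := (Event * Stamp)%type.

Record Execution : Type := mkExec {
  xE : Event -> Prop;
  xpo : Event -> Event -> Prop;
  xstmp : Event -> Stamp -> Prop;
  xso : SEvent -> SEvent -> Prop;
  xhb : SEvent -> SEvent -> Prop }.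

Definition is_execution (X : Execution) : Prop :=
  is_plain (mkPlain (xE X) (xpo X)) /\
  (forall e, xE X e -> exists a, xstmp X e a) /\
  (forall x y, xso X x y \/ xhb X x y ->
     (xE X (fst x) /\ xstmp X (fst x) (snd x)) /\ (xE X (fst y) /\ xstmp X (fst y) (snd y))).

Definition xppo (X : Execution) (x y : SEvent) : Prop :=
  xpo X (fst x) (fst y) /\ xstmp X (fst x) (snd x) /\ xstmp X (fst y) (snd y) /\
  to (snd x) (snd y).

Definition restrict_exec (X : Execution) (E1 : Event -> Prop) : Execution :=
  mkExec (fun e => xE X e /\ E1 e)
         (fun x y => xpo X x y /\ E1 x /\ E1 y)
         (fun e a => xstmp X e a /\ E1 e)
         (fun x y => xso X x y /\ E1 (fst x) /\ E1 (fst y))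
         (fun x y => xhb X x y /\ E1 (fst x) /\ E1 (fst y)).

Record Library : Type := mkLib {
  lib_M : Method -> bool;
  lib_loc : Event -> Val -> Prop;
  lib_C : Execution -> Prop;
  lib_loc_sub : forall e x, lib_M (ev_method e) = true -> lib_loc e x -> Loc x;
  lib_C_exec : forall X, lib_C X -> is_execution X;
  lib_mono : forall X hb',
      lib_C X ->
      (forall x y, clos_trans _ (fun a b => xppo X a b \/ xso X a b) x y -> hb' x y) ->
      (forall x y, hb' x y -> xhb X x y) ->
      lib_C (mkExec (xE X) (xpo X) (xstmp X) (xso X) hb');
  lib_decomp : forall X (E1 E2 : Event -> Prop),
      lib_C X ->
      (forall e, xE X e <-> (E1 e \/ E2 e)) ->
      (forall e, E1 e -> E2 e -> False) ->
      (forall x, (exists e, E1 e /\ lib_loc e x) -> (exists e, E2 e /\ lib_loc e x) -> False) ->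
      lib_C (restrict_exec X E1) }.

Definition compatible (L1 L2 : Library) : Prop :=
  forall m, lib_M L1 m = true -> lib_M L2 m = true -> False.

Definition methods_of (Lam : Library -> Prop) (m : Method) : Prop :=
  exists L', Lam L' /\ lib_M L' m = true.

Definition Implementation : Type := Tid -> Method -> list Val -> SeqProg.

Definition well_defined_impl (T : nat) (L : Library) (Lam : Library -> Prop)
    (I : Implementation) : Prop :=
  ~ Lam L /\
  forall t m vs, in_threads T t -> lib_M L m = true ->
    calls_only (methods_of Lam) (I t m vs) /\
    (forall v k G, ~ sem t (I t m vs) (v, S k) G) /\
    (forall v G, sem t (I t m vs) (v, 0) G -> exists e, pE G e).

Fixpoint translate (L : Library) (I : Implementation) (t : Tid) (p : SeqProg) : SeqProg :=
  match p with
  | PVal v => PVal v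
  | PBreak k v => PBreak k v
  | PLoop q => PLoop (translate L I t q)
  | PLet q f => PLet (translate L I t q) (fun v => translate L I t (f v))
  | PCall m vs => if lib_M L m then I t m vs else PCall m vs
  end.

Definition translate_conc (L : Library) (I : Implementation) (ps : Tid -> SeqProg) :
  Tid -> SeqProg := fun t => translate L I t (ps t).

Definition restrictG (G : PlainExec) (A : Event -> Prop) : PlainExec :=
  mkPlain (fun e => pE G e /\ A e) (fun x y => ppo G x y /\ A x /\ A y).

Definition wide_abstraction (L : Library) (I : Implementation)
    (G G' : PlainExec) (f : Event -> Event) : Prop :=
  (forall x, pE G x -> pE G' (f x)) /\
  (forall e', pE G' e' -> exists x, pE G x /\ f x = e') /\
  (forall x, pE G x -> lib_M L (ev_method x) = false) /\
  (forall x, pE G x -> lib_M L (ev_method (f x)) = false -> f x = x) /\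
  (forall x y, ppo G x y -> clos_refl_trans _ (ppo G') (f x) (f y)) /\
  (forall e1 e2, pE G e1 -> pE G e2 -> ppo G' (f e1) (f e2) -> ppo G e1 e2) /\
  (forall t iota m vs v', pE G' (t, iota, (m, vs, v')) -> lib_M L m = true ->
     sem t (I t m vs) (v', 0)
         (restrictG G (fun x => pE G x /\ f x = (t, iota, (m, vs, v'))))).

End Defs.

(* Main.v *)
Require Import Defs.
From Stdlib Require Import List Relations Arith Lia.
From Stdlib Require Import Classical ClassicalEpsilon FunctionalExtensionality PropExtensionality.

Section Generic.
Context {Val Method : Type}.
Notation Ev := (Event Val Method).
Notation PE := (PlainExec Val Method).

Lemma PE_ext (G1 G2 : PE) :
  (forall e, pE G1 e <-> pE G2 e) -> (forall x y, ppo G1 x y <-> ppo G2 x y) -> G1 = G2.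
Proof.
  destruct G1 as [E1 p1], G2 as [E2 p2]; simpl; intros HE Hp.
  assert (E1 = E2) by (apply functional_extensionality; intro; apply propositional_extensionality; auto).
  assert (p1 = p2) by (apply functional_extensionality; intro; apply functional_extensionality; intro;
                       apply propositional_extensionality; auto).
  subst; reflexivity.
Qed.

Definition Inv (G : PE) := forall x y, ppo G x y -> pE G x /\ pE G y.

Lemma seqG_inv G1 G2 : Inv G1 -> Inv G2 -> Inv (seqG G1 G2).
Proof.
  unfold Inv; simpl; intros H1 H2 x y [H|[H|[H H']]].
  - destruct (H1 _ _ H); tauto.
  - destruct (H2 _ _ H); tauto.
  - tauto.
Qed.

Lemma seqn_inv (Gs : nat -> PE) j : (forall i, i <= j -> Inv (Gs i)) -> Inv (seqn Gs j).
Proof.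
  induction j; intros H; simpl.
  - apply H; lia.
  - apply seqG_inv; [apply IHj; intros; apply H; lia | apply H; lia].
Qed.

Lemma seqn_pE (Gs : nat -> PE) j e : pE (seqn Gs j) e <-> exists i, i <= j /\ pE (Gs i) e.
Proof.
  induction j; simpl.
  - split; [intro; exists 0; auto | intros [i [Hi He]]; assert (i = 0) by lia; subst; auto].
  - rewrite IHj; split.
    + intros [[i [Hi He]]|He]; [exists i; split; auto; lia | exists (S j); auto].
    + intros [i [Hi He]]. destruct (Nat.eq_dec i (S j)); [subst; right; auto | left; exists i; split; auto; lia].
Qed.

Lemma sem_inv (p : SeqProg Val Method) : forall t r G, sem t p r G ->
  Inv G /\ (forall e, pE G e -> ev_thread e = t).
Proof.
  induction p as [v|m l|q IHq fn IHf|q IHq|k v]; intros t r G H; simpl in H.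
  - destruct H as [_ ->]; unfold Inv; simpl; tauto.
  - destruct H as [v' [iota [_ ->]]]; unfold Inv; simpl; split; [tauto| intros e ->; reflexivity].
  - destruct H as [[v [G1 [G2 [H1 [H2 [_ ->]]]]]] | [H _]].
    + destruct (IHq _ _ _ H1) as [I1 T1], (IHf _ _ _ _ H2) as [I2 T2].
      split; [apply seqG_inv; auto| simpl; intros e [He|He]; auto].
    + eauto.
  - destruct H as [j [Gs [Hlt [Hj [_ ->]]]]].
    assert (Hall : forall i, i <= j -> Inv (Gs i) /\ (forall e, pE (Gs i) e -> ev_thread e = t)).
    { intros i Hi. destruct (Nat.eq_dec i j); [subst; eauto|].
      destruct (Hlt i ltac:(lia)) as [v0 Hv]; eauto. }
    split; [apply seqn_inv; intros; apply Hall; auto|].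
    intros e He; apply seqn_pE in He; destruct He as [i [Hi He]]; apply (Hall i Hi); auto.
  - destruct H as [_ ->]; unfold Inv; simpl; tauto.
Qed.

Lemma sem_calls (P : Method -> Prop) (p : SeqProg Val Method) : forall t r G, sem t p r G ->
  calls_only P p -> forall e, pE G e -> P (ev_method e).
Proof.
  induction p as [v|m l|q IHq fn IHf|q IHq|k v]; intros t r G H Hc; simpl in H, Hc.
  - destruct H as [_ ->]; simpl; tauto.
  - destruct H as [v' [iota [_ ->]]]; simpl; intros e ->; exact Hc.
  - destruct Hc as [Hq Hf].
    destruct H as [[v [G1 [G2 [H1 [H2 [_ ->]]]]]] | [H _]].
    + simpl; intros e [He|He]; eauto.
    + eauto.
  - destruct H as [j [Gs [Hlt [Hj [_ ->]]]]].
    intros e He; apply seqn_pE in He; destruct He as [i [Hi He]].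
    destruct (Nat.eq_dec i j); [subst; eauto|].
    destruct (Hlt i ltac:(lia)) as [v0 Hv]; eauto.
  - destruct H as [_ ->]; simpl; tauto.
Qed.

Lemma crt_mono (R R' : Ev -> Ev -> Prop) x y :
  (forall a b, R a b -> R' a b) -> clos_refl_trans _ R x y -> clos_refl_trans _ R' x y.
Proof. intros H Hc; induction Hc; [apply rt_step; auto | apply rt_refl | eapply rt_trans; eauto]. Qed.

Lemma div_inj j a b i i' : i <= j -> i' <= j -> a * (j+1) + i = b * (j+1) + i' -> i = i'.
Proof.
  intros Hi Hi' E. destruct (Nat.lt_trichotomy a b) as [Hab|[->|Hab]]; [|lia|].
  - assert (S a * (j+1) <= b * (j+1)) by (apply Nat.mul_le_mono_r; lia). simpl in *; lia.
  - assert (S b * (j+1) <= a * (j+1)) by (apply Nat.mul_le_mono_r; lia). simpl in *; lia.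
Qed.

Definition fcomb (G1 : PE) (f1 f2 : Ev -> Ev) : Ev -> Ev :=
  fun x => if excluded_middle_informative (pE G1 x) then f1 x else f2 x.

Lemma fcomb_cases G1 f1 f2 x :
  (pE G1 x /\ fcomb G1 f1 f2 x = f1 x) \/ (~ pE G1 x /\ fcomb G1 f1 f2 x = f2 x).
Proof. unfold fcomb; destruct excluded_middle_informative; auto. Qed.

End Generic.

Fixpoint fseq {Val Method : Type} (Gs : nat -> PlainExec Val Method)
  (fs : nat -> Event Val Method -> Event Val Method) (j : nat) : Event Val Method -> Event Val Method :=
  match j with
  | 0 => fs 0
  | S j' => fcomb (seqn Gs j') (fseq Gs fs j') (fs (S j'))
  end.
Section Lib.
Context {Val Method Stamp : Type} {Loc : Val -> Prop} {to : Stamp -> Stamp -> Prop}.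
Context (L : @Library Val Method Stamp Loc to) (I : Implementation Val Method).
Notation Ev := (Event Val Method).
Notation PE := (PlainExec Val Method).

Definition AbsP (G G' : PE) (f : Ev -> Ev) (S : nat -> Prop) : Prop :=
 (forall x, pE G x -> pE G' (f x)) /\
 (forall e', pE G' e' -> exists x, pE G x /\ f x = e') /\
 (forall x, pE G x -> lib_M L (ev_method x) = false) /\
 (forall x, pE G x -> lib_M L (ev_method (f x)) = false -> f x = x) /\
 (forall x y, ppo G x y -> clos_refl_trans _ (ppo G') (f x) (f y)) /\
 (forall e1 e2, pE G e1 -> pE G e2 -> ppo G' (f e1) (f e2) -> ppo G e1 e2) /\
 (forall t iota m vs v', pE G' (t, iota, (m, vs, v')) -> lib_M L m = true ->
     sem t (I t m vs) (v', 0)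
         (restrictG G (fun x => pE G x /\ f x = (t, iota, (m, vs, v'))))) /\
 (forall e', pE G' e' -> lib_M L (ev_method e') = true -> S (snd (fst e'))).

Lemma AbsP_mono G G' f (S S' : nat -> Prop) : AbsP G G' f S -> (forall n, S n -> S' n) -> AbsP G G' f S'.
Proof. unfold AbsP; intros H HS; intuition. Qed.

Lemma AbsP_id G S : Inv G -> (forall x, pE G x -> lib_M L (ev_method x) = false) -> AbsP G G (fun x => x) S.
Proof.
  intros HI HM; unfold AbsP; repeat split; auto.
  - intros e' He; exists e'; auto.
  - intros; apply rt_step; auto.
  - intros t iota m vs v' He Hm; specialize (HM _ He); change (lib_M L m = false) in HM; congruence.
  - intros e' He Hm; rewrite HM in Hm; auto; discriminate.
Qed.

Lemma nonL (G G' : PE) f S e : AbsP G G' f S -> pE G' e -> lib_M L (ev_method e) = false -> pE G e.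
Proof.
  intros [Ha [Hb [Hc [Hd _]]]] He Hm.
  destruct (Hb _ He) as [x [Hx <-]]. rewrite Hd; auto.
Qed.

Lemma disj_parts G1 G2 G1' G2' f1 f2 (S1 S2 : nat -> Prop) :
  disjointG G1 G2 -> (forall n, S1 n -> S2 n -> False) ->
  AbsP G1 G1' f1 S1 -> AbsP G2 G2' f2 S2 -> disjointG G1' G2'.
Proof.
  intros HD HS H1 H2 e He1 He2.
  destruct (lib_M L (ev_method e)) eqn:Hm.
  - apply (HS (snd (fst e))); [apply H1 | apply H2]; auto.
  - apply (HD e); eapply nonL; eauto.
Qed.

Lemma compose G1 G2 G1' G2' f1 f2 (S1 S2 : nat -> Prop) :
  Inv G1 -> Inv G2 -> Inv G1' -> Inv G2' -> disjointG G1 G2 -> (forall n, S1 n -> S2 n -> False) ->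
  AbsP G1 G1' f1 S1 -> AbsP G2 G2' f2 S2 ->
  AbsP (seqG G1 G2) (seqG G1' G2') (fcomb G1 f1 f2) (fun n => S1 n \/ S2 n).
Proof.
  intros I1 I2 I1' I2' HD HS HA1 HA2.
  pose proof (disj_parts _ _ _ _ _ _ _ _ HD HS HA1 HA2) as HD'.
  pose proof HA1 as [a1 [b1 [c1 [d1 [e1 [g1 [h1 i1]]]]]]].
  pose proof HA2 as [a2 [b2 [c2 [d2 [e2 [g2 [h2 i2]]]]]]].
  unfold AbsP; simpl; repeat split.
  - intros x Hx; destruct (fcomb_cases G1 f1 f2 x) as [[Hx1 ->]|[Hx1 ->]]; [left; auto | right; apply a2; tauto].
  - intros e' [He|He].
    + destruct (b1 _ He) as [x [Hx <-]]; exists x; split; auto.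
      destruct (fcomb_cases G1 f1 f2 x) as [[_ ->]|[Hn _]]; tauto.
    + destruct (b2 _ He) as [x [Hx <-]]; exists x; split; auto.
      destruct (fcomb_cases G1 f1 f2 x) as [[Hx1 _]|[_ ->]]; [exfalso; eapply HD; eauto | auto].
  - intros x [Hx|Hx]; auto.
  - intros x Hx; destruct (fcomb_cases G1 f1 f2 x) as [[Hx1 ->]|[Hx1 ->]]; [apply d1; auto | apply d2; tauto].
  - intros x y [H|[H|[Hx Hy]]].
    + destruct (I1 _ _ H) as [Hx Hy].
      destruct (fcomb_cases G1 f1 f2 x) as [[_ ->]|[Hn _]]; [|tauto].
      destruct (fcomb_cases G1 f1 f2 y) as [[_ ->]|[Hn _]]; [|tauto].
      eapply crt_mono; [|apply e1; eauto]; simpl; auto.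
    + destruct (I2 _ _ H) as [Hx Hy].
      destruct (fcomb_cases G1 f1 f2 x) as [[Hn _]|[_ ->]]; [exfalso; eapply HD; eauto|].
      destruct (fcomb_cases G1 f1 f2 y) as [[Hn _]|[_ ->]]; [exfalso; eapply HD; eauto|].
      eapply crt_mono; [|apply e2; eauto]; simpl; auto.
    + destruct (fcomb_cases G1 f1 f2 x) as [[_ ->]|[Hn _]]; [|tauto].
      destruct (fcomb_cases G1 f1 f2 y) as [[Hn _]|[_ ->]]; [exfalso; eapply HD; eauto|].
      apply rt_step; right; right; auto.
  - intros x y Hx Hy H.
    destruct (fcomb_cases G1 f1 f2 x) as [[Hx1 Ex]|[Hx1 Ex]];
    destruct (fcomb_cases G1 f1 f2 y) as [[Hy1 Ey]|[Hy1 Ey]]; rewrite Ex, Ey in H.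
    + destruct H as [H|[H|[H H']]].
      * left; auto.
      * exfalso; apply (HD' (f1 x)); [apply a1; auto | apply (I2' _ _ H)].
      * exfalso; apply (HD' (f1 y)); [apply a1; auto | auto].
    + right; right; split; auto; tauto.
    + assert (Hx2 : pE G2 x) by tauto.
      destruct H as [H|[H|[H H']]].
      * exfalso; apply (HD' (f2 x)); [apply (I1' _ _ H) | apply a2; auto].
      * exfalso; apply (HD' (f1 y)); [apply a1; auto | apply (I2' _ _ H)].
      * exfalso; apply (HD' (f2 x)); [auto | apply a2; auto].
    + assert (Hx2 : pE G2 x) by tauto. assert (Hy2 : pE G2 y) by tauto.
      destruct H as [H|[H|[H H']]].
      * exfalso; apply (HD' (f2 x)); [apply (I1' _ _ H) | apply a2; auto].
      * right; left; auto.
      * exfalso; apply (HD' (f2 x)); [auto | apply a2; auto].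
  - intros t iota m vs v' [He|He] Hm.
    + set (e' := (t, iota, (m, vs, v'))) in *.
      assert (Hiff : forall x, ((pE G1 x \/ pE G2 x) /\ fcomb G1 f1 f2 x = e') <-> (pE G1 x /\ f1 x = e')).
      { intro x; destruct (fcomb_cases G1 f1 f2 x) as [[Hx1 ->]|[Hx1 ->]]; split; try tauto.
        intros [[H|H] E]; [tauto|]. exfalso; apply (HD' e'); [auto | rewrite <- E; apply a2; auto]. }
      replace (restrictG (seqG G1 G2) _) with (restrictG G1 (fun x => pE G1 x /\ f1 x = e')); [apply h1; auto|].
      apply PE_ext; simpl.
      * intro x; rewrite Hiff; tauto.
      * intros x y; rewrite !Hiff; split.
        -- intros [H [Hx Hy]]; split; [left|]; auto.
        -- intros [[H|[H|[Hx2 Hy2]]] [Hx Hy]]; split; auto; exfalso.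
           ++ apply (HD x); [tauto | apply (I2 _ _ H)].
           ++ apply (HD y); tauto.
    + set (e' := (t, iota, (m, vs, v'))) in *.
      assert (Hiff : forall x, ((pE G1 x \/ pE G2 x) /\ fcomb G1 f1 f2 x = e') <-> (pE G2 x /\ f2 x = e')).
      { intro x; destruct (fcomb_cases G1 f1 f2 x) as [[Hx1 ->]|[Hx1 ->]]; split; try tauto.
        - intros [_ E]; exfalso; apply (HD' e'); [rewrite <- E; apply a1; auto | auto].
        - intros [H E]; exfalso; apply (HD x); auto. }
      replace (restrictG (seqG G1 G2) _) with (restrictG G2 (fun x => pE G2 x /\ f2 x = e')); [apply h2; auto|].
      apply PE_ext; simpl.
      * intro x; rewrite Hiff; tauto.
      * intros x y; rewrite !Hiff; split.
        -- intros [H [Hx Hy]]; split; [right; left|]; auto.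
        -- intros [[H|[H|[Hx2 Hy2]]] [Hx Hy]]; split; auto; exfalso.
           ++ apply (HD x); [apply (I1 _ _ H) | tauto].
           ++ apply (HD x); tauto.
  - intros e' [He|He] Hm; [left; apply i1 | right; apply i2]; auto.
Qed.

End Lib.
Section Main.
Context {Val Method Stamp : Type} {Loc : Val -> Prop} {to : Stamp -> Stamp -> Prop}.
Context (T : nat) (L : @Library Val Method Stamp Loc to)
        (Lam : @Library Val Method Stamp Loc to -> Prop) (I : Implementation Val Method).
Context (HcompL : forall L1, Lam L1 -> compatible L L1) (Hwd : well_defined_impl T L Lam I).
Notation Ev := (Event Val Method).
Notation PE := (PlainExec Val Method).

Lemma main_seq (p : SeqProg Val Method) : forall t r G (ns : nat -> nat),
  in_threads T t -> (forall a b, ns a = ns b -> a = b) ->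
  sem t (translate L I t p) r G ->
  exists G' f, sem t p r G' /\ AbsP L I G G' f (fun n => exists k, n = ns k).
Proof.
  induction p as [v|m l|q IHq fn IHf|q IHq|k v]; intros t r G ns Ht Hns H; simpl in H.
  - exists G, (fun x => x); split; [exact H|].
    destruct H as [_ ->]; apply AbsP_id; unfold Inv; simpl; tauto.
  - destruct (lib_M L m) eqn:Hm.
    + destruct Hwd as [_ Hw]. destruct (Hw t m l Ht Hm) as [Hc [Hnb Hne]].
      destruct r as [v' k]. destruct k as [|k]; [|exfalso; eapply Hnb; eauto].
      set (ev := (t, ns 0, (m, l, v')) : Ev).
      destruct (sem_inv _ _ _ _ H) as [HI _].
      exists (single_G ev), (fun _ => ev); split.
      { simpl; exists v', (ns 0); auto. }
      unfold AbsP; simpl; repeat split.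
      * destruct (Hne _ _ H) as [x Hx]; intros e' ->; exists x; auto.
      * intros x Hx. pose proof (sem_calls _ _ _ _ _ H Hc x Hx) as [L' [HL' HM']].
        destruct (lib_M L (ev_method x)) eqn:E; auto. exfalso; eapply HcompL; eauto.
      * intros x _ E; change (lib_M L m = false) in E; congruence.
      * intros; apply rt_refl.
      * tauto.
      * intros t0 iota m0 vs0 v0 He _. injection He; intros; subst.
        replace (restrictG G _) with G; auto.
        apply PE_ext; simpl; [tauto|]. intros x y; split; [intro Hp; destruct (HI _ _ Hp); tauto | tauto].
      * intros e' -> _; exists 0; reflexivity.
    + destruct H as [v' [iota [Hr HG]]].
      exists G, (fun x => x); split; [simpl; eauto|].
      subst G; apply AbsP_id; [unfold Inv; simpl; tauto|].
      intros x ->; exact Hm.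
  - destruct H as [[v [G1 [G2 [H1 [H2 [HD ->]]]]]] | [H Hr]].
    + destruct (IHq t (v, 0) G1 (fun k => ns (2 * k)) Ht) as [G1' [f1 [S1 A1]]]; auto.
      { intros a b E; apply Hns in E; lia. }
      destruct (IHf v t r G2 (fun k => ns (2 * k + 1)) Ht) as [G2' [f2 [S2 A2]]]; auto.
      { intros a b E; apply Hns in E; lia. }
      assert (HS : forall n, (exists k, n = ns (2 * k)) -> (exists k, n = ns (2 * k + 1)) -> False).
      { intros n [a ->] [b E]; apply Hns in E; lia. }
      exists (seqG G1' G2'), (fcomb G1 f1 f2); split.
      * left; exists v, G1', G2'; repeat split; auto. exact (disj_parts L I _ _ _ _ _ _ _ _ HD HS A1 A2).
      * eapply AbsP_mono; [apply (compose L I _ _ _ _ _ _ _ _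
            (proj1 (sem_inv _ _ _ _ H1)) (proj1 (sem_inv _ _ _ _ H2))
            (proj1 (sem_inv _ _ _ _ S1)) (proj1 (sem_inv _ _ _ _ S2)) HD HS A1 A2)|].
        intros n [[a ->]|[a ->]]; eauto.
    + destruct (IHq t r G ns Ht Hns H) as [G' [f [S A]]].
      exists G', f; split; auto. right; auto.
  - destruct H as [j [Gs [Hlt [Hj [HD ->]]]]].
    set (nsi := fun i k => ns (k * (j + 1) + i)).
    assert (Hnsi : forall i a b, nsi i a = nsi i b -> a = b).
    { unfold nsi; intros i a b E; apply Hns in E.
      assert (a * (j + 1) = b * (j + 1)) by lia.
      apply (Nat.mul_cancel_r a b (j + 1)); auto; lia. }
    assert (Hex : forall i, exists Gf : PE * (Ev -> Ev), i <= j ->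
       (i < j -> exists v0, sem t q (v0, 0) (fst Gf)) /\
       (i = j -> sem t q (fst r, S (snd r)) (fst Gf)) /\
       AbsP L I (Gs i) (fst Gf) (snd Gf) (fun n => exists k, n = nsi i k)).
    { intro i. destruct (le_lt_dec i j) as [Hi|Hi].
      - destruct (Nat.eq_dec i j) as [->|Hne].
        + destruct (IHq t _ (Gs j) (nsi j) Ht (Hnsi j) Hj) as [G' [f [Sm A]]].
          exists (G', f); simpl; intros _; split; [intros; lia | split; [intros; exact Sm | exact A]].
        + destruct (Hlt i ltac:(lia)) as [v0 Hv].
          destruct (IHq t _ (Gs i) (nsi i) Ht (Hnsi i) Hv) as [G' [f [Sm A]]].
          exists (G', f); simpl; intros _; split; [intros; eauto | split; [intros; lia | exact A]].
      - exists (@empty_G Val Method, fun x : Ev => x); intros; lia. }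
    assert (HF : exists F : nat -> PE * (Ev -> Ev), forall i, i <= j ->
       (i < j -> exists v0, sem t q (v0, 0) (fst (F i))) /\
       (i = j -> sem t q (fst r, S (snd r)) (fst (F i))) /\
       AbsP L I (Gs i) (fst (F i)) (snd (F i)) (fun n => exists k, n = nsi i k)).
    { exists (fun i => proj1_sig (constructive_indefinite_description _ (Hex i))).
      intro i; exact (proj2_sig (constructive_indefinite_description _ (Hex i))). }
    destruct HF as [F HF].
    set (Gs' := fun i => fst (F i)). set (fs := fun i => snd (F i)).
    assert (HP : forall i, i <= j -> AbsP L I (Gs i) (Gs' i) (fs i) (fun n => exists k, n = nsi i k)).
    { intros i Hi; apply (HF i Hi). }
    assert (HIs : forall i, i <= j -> Inv (Gs i) /\ Inv (Gs' i)).
    { intros i Hi. destruct (Nat.eq_dec i j) as [->|Hne].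
      - split; [apply (sem_inv _ _ _ _ Hj) | apply (sem_inv _ _ _ _ (proj1 (proj2 (HF j Hi)) eq_refl))].
      - destruct (Hlt i ltac:(lia)) as [v0 Hv]. destruct (proj1 (HF i Hi) ltac:(lia)) as [v1 Hv1].
        split; [apply (sem_inv _ _ _ _ Hv) | apply (sem_inv _ _ _ _ Hv1)]. }
    assert (HSd : forall i i', i <= j -> i' <= j -> i <> i' -> forall n,
       (exists k, n = nsi i k) -> (exists k, n = nsi i' k) -> False).
    { unfold nsi; intros i i' Hi Hi' Hne n [a ->] [b E]. apply Hns in E.
      apply div_inj in E; auto. }
    exists (seqn Gs' j), (fseq Gs fs j); split.
    { exists j, Gs'; repeat split.
      - intros i Hi; apply (HF i ltac:(lia)); auto.
      - apply (HF j ltac:(lia)); auto.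
      - intros i i' Hi Hi' Hne. exact (disj_parts L I _ _ _ _ _ _ _ _ (HD i i' Hi Hi' Hne)
          (HSd i i' Hi Hi' Hne) (HP i Hi) (HP i' Hi')). }
    assert (Hind : forall j', j' <= j -> AbsP L I (seqn Gs j') (seqn Gs' j') (fseq Gs fs j')
                     (fun n => exists i k, i <= j' /\ n = ns (k * (j + 1) + i))).
    { induction j' as [|j' IH]; intros Hj'.
      - eapply AbsP_mono; [apply (HP 0 Hj')|]. intros n [k ->]; exists 0, k; split; auto.
      - assert (D1 : disjointG (seqn Gs j') (Gs (S j'))).
        { intros e He1 He2. apply seqn_pE in He1. destruct He1 as [i [Hi He1]].
          apply (HD i (S j') ltac:(lia) Hj' ltac:(lia) e); auto. }
        assert (D2 : forall n, (exists i k, i <= j' /\ n = ns (k * (j + 1) + i)) ->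
                       (exists k, n = nsi (S j') k) -> False).
        { intros n [i [k [Hi ->]]] Hb. apply (HSd i (S j') ltac:(lia) Hj' ltac:(lia) _ (ex_intro _ k eq_refl) Hb). }
        eapply AbsP_mono; [apply (compose L I _ _ _ _ _ _ _ _
           (seqn_inv _ _ (fun i (Hi : i <= j') => proj1 (HIs i ltac:(lia))))
           (proj1 (HIs (S j') Hj'))
           (seqn_inv _ _ (fun i (Hi : i <= j') => proj2 (HIs i ltac:(lia))))
           (proj2 (HIs (S j') Hj')) D1 D2 (IH ltac:(lia)) (HP (S j') Hj'))|].
        intros n [[i [k [Hi ->]]]|[k ->]]; [exists i, k; split; auto | exists (S j'), k; split; auto]. }
    eapply AbsP_mono; [apply (Hind j (le_n j))|]. intros n [i [k [_ ->]]]; eauto.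
  - exists G, (fun x => x); split; [exact H|].
    destruct H as [_ ->]; apply AbsP_id; unfold Inv; simpl; tauto.
Qed.
End Main.

Lemma choice_aux {A B : Type} (P : A -> B -> Prop) : (forall a, exists b, P a b) -> exists F : A -> B, forall a, P a (F a).
Proof.
  intro H. exists (fun a => proj1_sig (constructive_indefinite_description _ (H a))).
  intro a; exact (proj2_sig (constructive_indefinite_description _ (H a))).
Qed.

Theorem mainTheorem1
  (Val Method Stamp : Type) (Loc : Val -> Prop) (to : Stamp -> Stamp -> Prop)
  (T : nat)
  (L : @Library Val Method Stamp Loc to)
  (Lam : @Library Val Method Stamp Loc to -> Prop)
  (I : Implementation Val Method)
  (ps : Tid -> SeqProg Val Method) (vs : Tid -> Val) (G : PlainExec Val Method) :
  (forall L1 L2, Lam L1 -> Lam L2 -> L1 <> L2 -> compatible L1 L2) ->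
  (forall L1, Lam L1 -> compatible L L1) ->
  ~ Lam L ->
  well_defined_impl T L Lam I ->
  (forall t, in_threads T t ->
     calls_only (fun m => methods_of Lam m \/ lib_M L m = true) (ps t)) ->
  csem T (translate_conc L I ps) vs G ->
  exists (G' : PlainExec Val Method) (f : Event Val Method -> Event Val Method),
    csem T ps vs G' /\ wide_abstraction L I G G' f.
Proof.
  intros _ HcompL _ Hwd _ [Gs [Hsem [Hdisj ->]]].
  assert (Hex : forall t, exists Gf : PlainExec Val Method * (Event Val Method -> Event Val Method),
     in_threads T t -> sem t (ps t) (vs t, 0) (fst Gf) /\
       AbsP L I (Gs t) (fst Gf) (snd Gf) (fun n => exists k, n = k)).
  { intro t. destruct (classic (in_threads T t)) as [Ht|Ht].
    - destruct (main_seq T L Lam I HcompL Hwd (ps t) t (vs t, 0) (Gs t) (fun k => k) Ht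
                  (fun a b E => E) (Hsem t Ht)) as [G' [f [S A]]].
      exists (G', f); auto.
    - exists (Gs t, fun x => x); tauto. }
  destruct (choice_aux _ Hex) as [F HF].
  set (G't := fun t => fst (F t)). set (ft := fun t => snd (F t)).
  assert (HS : forall t, in_threads T t -> sem t (ps t) (vs t, 0) (G't t)) by (intros; apply HF; auto).
  assert (HA : forall t, in_threads T t -> AbsP L I (Gs t) (G't t) (ft t) (fun n => exists k, n = k))
    by (intros; apply HF; auto).
  assert (TG : forall t e, in_threads T t -> pE (Gs t) e -> ev_thread e = t)
    by (intros t e Ht; apply (sem_inv _ _ _ _ (Hsem t Ht))).
  assert (IG : forall t, in_threads T t -> Inv (Gs t))
    by (intros t Ht; apply (sem_inv _ _ _ _ (Hsem t Ht))).
  assert (TG' : forall t e, in_threads T t -> pE (G't t) e -> ev_thread e = t)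
    by (intros t e Ht; apply (sem_inv _ _ _ _ (HS t Ht))).
  assert (IG' : forall t, in_threads T t -> Inv (G't t))
    by (intros t Ht; apply (sem_inv _ _ _ _ (HS t Ht))).
  exists (mkPlain (fun e => exists t, in_threads T t /\ pE (G't t) e)
                  (fun x y => exists t, in_threads T t /\ ppo (G't t) x y)),
         (fun x => ft (ev_thread x) x).
  split.
  { exists G't; repeat split; auto.
    intros t t' Ht Ht' Hne e H1 H2. apply Hne. rewrite <- (TG' t e Ht H1). apply TG'; auto. }
  unfold wide_abstraction; simpl; repeat split.
  - intros x [t [Ht Hx]]. rewrite (TG t x Ht Hx). exists t; split; auto. apply (HA t Ht); auto.
  - intros e' [t [Ht He]]. destruct (proj1 (proj2 (HA t Ht)) e' He) as [x [Hx <-]].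
    exists x; split; [exists t; auto|]. rewrite (TG t x Ht Hx); auto.
  - intros x [t [Ht Hx]]. apply (HA t Ht); auto.
  - intros x [t [Ht Hx]]. rewrite (TG t x Ht Hx). apply (HA t Ht); auto.
  - intros x y [t [Ht H]]. destruct (IG t Ht _ _ H) as [Hx Hy].
    rewrite (TG t x Ht Hx), (TG t y Ht Hy).
    eapply crt_mono; [|apply (HA t Ht); eauto]. simpl; eauto.
  - intros e1 e2 [t1 [Ht1 H1]] [t2 [Ht2 H2]] [t [Ht Hp]].
    rewrite (TG t1 e1 Ht1 H1), (TG t2 e2 Ht2 H2) in Hp.
    destruct (IG' t Ht _ _ Hp) as [Hf1 Hf2].
    assert (E1 : t1 = t).
    { rewrite <- (TG' t _ Ht Hf1). symmetry; apply (TG' t1); auto. apply (HA t1 Ht1); auto. }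
    assert (E2 : t2 = t).
    { rewrite <- (TG' t _ Ht Hf2). symmetry; apply (TG' t2); auto. apply (HA t2 Ht2); auto. }
    subst t1 t2. exists t; split; auto. apply (HA t Ht); auto.
  - intros t0 iota m vs0 v' [t [Ht He]] Hm.
    pose proof (TG' t _ Ht He) as Et; change (t0 = t) in Et; subst t0.
    set (e' := (t, iota, (m, vs0, v'))) in *.
    assert (Hiff : forall x, ((exists t1, in_threads T t1 /\ pE (Gs t1) x) /\ ft (ev_thread x) x = e')
                    <-> (pE (Gs t) x /\ ft t x = e')).
    { intro x; split.
      - intros [[t1 [Ht1 Hx]] E]. rewrite (TG t1 x Ht1 Hx) in E.
        assert (t1 = t).
        { pose proof (proj1 (HA t1 Ht1) x Hx) as Hf. rewrite E in Hf.
          pose proof (TG' t1 _ Ht1 Hf) as X. simpl in X; auto. }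
        subst; auto.
      - intros [Hx E]; split; [exists t; auto | rewrite (TG t x Ht Hx); auto]. }
    replace (restrictG _ _) with (restrictG (Gs t) (fun x => pE (Gs t) x /\ ft t x = e')).
    + apply (proj1 (proj2 (proj2 (proj2 (proj2 (proj2 (proj2 (HA t Ht)))))))); auto.
    + apply PE_ext; simpl.
      * intro x; rewrite Hiff; split; [intros [H1 H2]; split; [exists t; auto | auto] | tauto].
      * intros x y; rewrite !Hiff; split.
        -- intros [H [Hx Hy]]; split; [exists t; auto | auto].
        -- intros [[t2 [Ht2 H]] [Hx Hy]]; split; auto.
           destruct (IG t2 Ht2 _ _ H) as [Hx2 _].
           replace t with t2; auto. rewrite <- (TG t x Ht (proj1 Hx)); symmetry; apply (TG t2); auto.
Qed.
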